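(* Let $\lambda^1,\dots,\lambda^m$ be partitions of total size $n$ and $0\le k_1<k_2<\dots<k_m$ distinct nonnegative integers. Then the irreducible representation $$\mathrm{Ind}_{(\mathbb{C}^\times\wr S_{|\lambda^1|})\times\dots\times(\mathbb{C}^\times\wr S_{|\lambda^m|})}^{\mathbb{C}^\times\wr S_n}\left(S^{\lambda^1,k_1}\otimes\dots\otimes S^{\lambda^m,k_m}\right)$$ of $T\rtimes S_n$ is polynomial (of degree $k_1|\lambda^1|+k_2|\lambda^2|+\dots+k_m|\lambda^m|$) if and only if either $k_1\neq 0$, or $k_1=0$ and $\lambda^1$ is a one-row partition.
   Context: Let $T\subset GL_n(\mathbb{C})$ be the diagonal torus and identify $S_n$ with the permutation matrices; $T\rtimes S_n\cong\mathbb{C}^\times\wr S_n$ is the group of monomial matrices. All representations are complex algebraic. For a partition $\lambda$ of $r$ and an integer $k$, $S^{\lambda,k}$ is the representation of $\mathbb{C}^\times\wr S_r$ on the Specht module $S^\lambda$ with each copy of $\mathbb{C}^\times$ acting by $z\mapsto z^k$; block-diagonal products $(\mathbb{C}^\times\wr S_{r_1})\times\dots\times(\mathbb{C}^\times\wr S_{r_m})$ are subgroups of $\mathbb{C}^\times\wr S_n$. Let $V=\mathbb{C}^n$ be the restriction to $T\rtimes S_n$ of the defining representation of $GL_n$. A representation of $T\rtimes S_n$ is called polynomial of degree $d$ if it is a direct summand of a direct sum of copies of $V^{\otimes d}$, and polynomial if it is a direct sum of polynomial representations of various degrees. *)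

(* Defs.v *)
From HB Require Import structures.
From mathcomp Require Import all_boot all_order all_algebra all_fingroup.
From mathcomp Require Import Rstruct complex.

Set Implicit Arguments.
Unset Strict Implicit.
Unset Printing Implicit Defensive.

Import Order.TTheory GRing.Theory Num.Theory.
Local Open Scope ring_scope.

(* The group T x| S_n of monomial n x n matrices is parametrized by    *)
(* pairs (t, s) with t : 'I_n -> F nowhere zero and s : {perm 'I_n}, the      *)
(* element being diag(t) * pmat s, where pmat s is the permutation      *)
(* matrix sending the basis vector e_j to e_(s j).                     *)

Section Generic.
Variable F : fieldType.

Definition monomx n (t : 'I_n -> F) (s : {perm 'I_n}) (i j : 'I_n) : F :=
  t i * (i == s j)%:R.

(* m copies of the tensor power V^{(x) d}, V = F^n, in coordinates:
   the vector u has coordinate u (c, w) on the basis vector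
   e_(w 0) (x) ... (x) e_(w (d-1)) of the c-th copy. *)
Definition tpow_copies (n d mc : nat) :=
  {ffun ('I_mc * {ffun 'I_d -> 'I_n}) -> F^o}.

Definition act_tpow n d mc (t : 'I_n -> F) (s : {perm 'I_n})
  (u : tpow_copies n d mc) : tpow_copies n d mc :=
  [ffun cw : 'I_mc * {ffun 'I_d -> 'I_n} =>
     \sum_(v : {ffun 'I_d -> 'I_n})
        (\prod_(q < d) monomx t s (cw.2 q) (v q)) * u (cw.1, v)].

Definition nowhere0 n (t : 'I_n -> F) := forall x, t x != 0.

(* W (a subspace of an ambient space V on which T x| S_n acts by act)
   is polynomial of degree d: it is (isomorphic to) a direct summand of
   a direct sum of mc copies of V^{(x) d}. *)
Definition is_poly_deg n (V : vectType F)
    (act : ('I_n -> F) -> {perm 'I_n} -> V -> V) (W : {vspace V}) (d : nat) :=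
  exists mc (iota : 'Hom(V, tpow_copies n d mc))
            (p : 'Hom(tpow_copies n d mc, V)),
    [/\ forall u, p u \in W,
        forall w, w \in W -> p (iota w) = w &
        forall t s, nowhere0 t ->
          (forall w, w \in W -> iota (act t s w) = act_tpow t s (iota w)) /\
          (forall u, p (act_tpow t s u) = act t s (p u))].

Definition is_poly n (V : vectType F)
    (act : ('I_n -> F) -> {perm 'I_n} -> V -> V) (W : {vspace V}) :=
  exists N (Ws : 'I_N -> {vspace V}) (ds : 'I_N -> nat),
    [/\ (\sum_(j < N) Ws j)%VS = W,
        directv (\sum_(j < N) Ws j) &
        forall j, (forall t s, nowhere0 t ->
                     forall w, w \in Ws j -> act t s w \in Ws j)
                  /\ is_poly_deg act (Ws j) (ds j)].

Definition is_partition (l : seq nat) :=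
  sorted geq l && all (fun x => 0 < x)%N l.

(* canonical tableau t0 of shape l: the numbers 0 .. |l|-1 filled in
   row by row; rowof / colof give the row / column of x in t0. *)
Definition rowof (l : seq nat) (x : nat) : nat :=
  count (fun j => sumn (take j.+1 l) <= x)%N (iota 0 (size l)).
Definition colof (l : seq nat) (x : nat) : nat :=
  x - sumn (take (rowof l x) l).

(* tabloids are encoded by their row function (number |-> row),
   rows being encoded in 'I_R.+1 for a bound R >= number of rows. *)
Definition tabl (R : nat) (l : seq nat) := {ffun 'I_(sumn l) -> 'I_R.+1}.
Definition permmod (R : nat) (l : seq nat) := {ffun tabl R l -> F^o}.

(* the tableau t_s puts the number s x in the box where t0 has x;
   polytab R l s is the polytabloid e_(t_s) = sum_(p in C_(t_s)) sgn p {p t_s}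
   where C_(t_s) is the column group of t_s. *)
Definition polytab (R : nat) (l : seq nat) (s : {perm 'I_(sumn l)}) : permmod R l :=
  let rowt : tabl R l := [ffun y => inord (rowof l (s^-1%g y))] in
  [ffun a : tabl R l =>
     \sum_(p : {perm 'I_(sumn l)} |
              [forall y, colof l (s^-1%g (p y)) == colof l (s^-1%g y)])
        (-1) ^+ p * (a == [ffun y => rowt (p^-1%g y)])%:R].

Definition specht (R : nat) (l : seq nat) : {vspace permmod R l} :=
  <<[seq @polytab R l s | s <- enum {perm 'I_(sumn l)}]>>%VS.

Section Induced.
Variables (m : nat) (lam : 'I_m.+1 -> seq nat) (k : 'I_m.+1 -> nat).

Definition bsize (i : 'I_m.+1) : nat := sumn (lam i).
Definition ntot : nat := (\sum_(i < m.+1) bsize i)%N.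

(* position x of 'I_ntot lies in the block blk x (blocks are consecutive,
   of sizes bsize 0, bsize 1, ...); tagnat.Rank i o is the o-th position
   of block i. *)
Definition blk (x : 'I_ntot) : 'I_m.+1 := @tagnat.sig1 m.+1 bsize x.
Definition bpos (i : 'I_m.+1) (o : 'I_(bsize i)) : 'I_ntot :=
  @tagnat.Rank m.+1 bsize i o.

(* the tensor product (x)_i M^(lam i) realised as functions on tuples of
   tabloids, a tuple being encoded by one global row function on 'I_ntot *)
Definition gtabl := {ffun 'I_ntot -> 'I_ntot.+1}.
Definition tensmod := {ffun gtabl -> F^o}.
Definition restr (a : gtabl) (i : 'I_m.+1) : tabl ntot (lam i) :=
  [ffun o => a (bpos o)].
Definition tens (f : forall i : 'I_m.+1, permmod ntot (lam i)) : tensmod :=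
  [ffun a => \prod_(i < m.+1) f i (restr a i)].

Definition Xspace : {vspace tensmod} :=
  <<[seq tens (fun i => tnth (vbasis (specht ntot (lam i))) (c i))
    | c : {dffun forall i : 'I_m.+1, 'I_(\dim (specht ntot (lam i)))}]>>%VS.

(* the subgroup H = prod_i (C^x wr S_(bsize i)): its permutations *)
Definition blockpres (b : {perm 'I_ntot}) := [forall x, blk (b x) == blk x].
Definition permact (b : {perm 'I_ntot}) (f : tensmod) : tensmod :=
  [ffun a : gtabl => f [ffun x => a (b x)]].
(* diag(t) acts on X by the scalar prod_x t_x ^ k_(blk x) *)
Definition torchar (t : 'I_ntot -> F) : F :=
  \prod_(x : 'I_ntot) t x ^+ k (blk x).

(* Ind_H^G X = { f : G -> X | f(h g) = h . f(g) }, (g . f)(y) = f(y g).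
   Since T <= H, f is determined by phi(s) := f(pmat s), s in S_n;
   we realise Ind as a subspace of the functions {perm 'I_n} -> tensmod. *)
Definition indamb := {ffun {perm 'I_ntot} -> tensmod}.

(* the element of Ind supported on H pmat s with value x at pmat s *)
Definition indvec (s : {perm 'I_ntot}) (x : tensmod) : indamb :=
  [ffun u : {perm 'I_ntot} => \sum_(b : {perm 'I_ntot} | blockpres b && (u == (s * b)%g))
                          permact b x].

Definition IndW : {vspace indamb} :=
  <<[seq indvec s x | s <- enum {perm 'I_ntot}, x <- vbasis Xspace]>>%VS.

(* action of g = diag(t) pmat p : (g . f)(pmat s) = f(pmat s . g)
   = f(diag(t o s^-1) pmat (s o p)) = torchar(t o s^-1) phi(s o p) *)
Definition actInd (t : 'I_ntot -> F) (p : {perm 'I_ntot}) (phi : indamb) : indamb :=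
  [ffun s : {perm 'I_ntot} => torchar (fun x => t (s^-1%g x)) *: phi (p * s)%g].

End Induced.
End Generic.

Definition CC : fieldType := (Rdefinitions.R)[i].

(* Main.v *)
Require Import Defs.
From HB Require Import structures.
From mathcomp Require Import all_boot all_order all_algebra all_fingroup.
From mathcomp Require Import Rstruct complex.

Set Implicit Arguments.
Unset Strict Implicit.
Unset Printing Implicit Defensive.
Import Order.TTheory GRing.Theory Num.Theory.
Local Open Scope ring_scope.

Section Tag.
Variables (N : nat) (p_ : 'I_N -> nat).

Lemma sig1_Rank (i : 'I_N) (s : 'I_(\sum_i p_ i)%N) :
  @tagnat.sig1 N p_ s = i -> exists o : 'I_(p_ i), tagnat.Rank i o = s.
Proof.
move=> e; exists (cast_ord (congr1 p_ e) (tagnat.sig2 s)).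
apply/val_inj/eqP.
have := tagnat.eq_Rank (cast_ord (congr1 p_ e) (tagnat.sig2 s)) (tagnat.sig2 s).
rewrite tagnat.sig2K => ->; apply/andP; split; [by rewrite e | by []].
Qed.

Lemma Rank_inj (i : 'I_N) : injective (@tagnat.Rank N p_ i).
Proof.
move=> o1 o2 /(congr1 val) /eqP; rewrite tagnat.eq_Rank eqxx /=.
by move/eqP/val_inj.
Qed.

Lemma card_sig1 (i : 'I_N) :
  #|[pred s : 'I_(\sum_i p_ i)%N | @tagnat.sig1 N p_ s == i]| = p_ i.
Proof.
rewrite -[RHS](card_ord (p_ i)) -(card_imset _ (@Rank_inj i)); apply: eq_card => s.
rewrite inE; apply/eqP/imsetP => [/sig1_Rank [o <-]|[o _ ->]].
  by exists o.
exact: tagnat.Rank1K.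
Qed.

End Tag.
Lemma span_closed (K : fieldType) (vT : vectType K) (P : vT -> Prop)
  (X : seq vT) : P 0 -> (forall a u v, P u -> P v -> P (a *: u + v)) ->
  (forall x, x \in X -> P x) -> forall v, v \in <<X>>%VS -> P v.
Proof.
move=> P0 Pc PX v /(@coord_span _ _ _ (in_tuple X)) ->.
elim/big_ind: _ => //.
  by move=> x y Px Py; have := Pc 1 x y Px Py; rewrite scale1r.
move=> i _; have := Pc (coord (in_tuple X) i v) _ _ (PX _ (mem_nth 0 (ltn_ord i))) P0.
by rewrite addr0.
Qed.

Lemma ffunDE (aT : finType) (K : fieldType) (rT : lmodType K) (f g : {ffun aT -> rT}) x :
  (f + g) x = f x + g x.
Proof. by rewrite ffunE. Qed.
Lemma ffunZE (aT : finType) (K : fieldType) (rT : lmodType K) (c : K) (f : {ffun aT -> rT}) x :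
  (c *: f) x = c *: f x.
Proof. by rewrite ffunE. Qed.
Lemma ffun0E (aT : finType) (K : fieldType) (rT : lmodType K) x :
  (0 : {ffun aT -> rT}) x = 0.
Proof. by rewrite ffunE. Qed.

Lemma vspace_closed (K : fieldType) (vT : vectType K) (P : vT -> Prop)
  (U : {vspace vT}) : P 0 -> (forall a u v, P u -> P v -> P (a *: u + v)) ->
  (forall x, x \in vbasis U -> P x) -> forall v, v \in U -> P v.
Proof.
move=> P0 Pc PX v /coord_vbasis ->.
elim/big_ind: _ => //.
  by move=> x y Px Py; have := Pc 1 x y Px Py; rewrite scale1r.
move=> i _; have hi : (vbasis U)`_i \in vbasis U by apply: mem_nth; rewrite size_tuple.
by have := Pc (coord (vbasis U) i v) _ _ (PX _ hi) P0; rewrite addr0.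
Qed.


Lemma act_tpowE_gen (K : fieldType) n d mc (t : 'I_n -> K) (q : {perm 'I_n})
  (u : tpow_copies K n d mc) c w :
  act_tpow t q u (c, w) = (\prod_(j < d) t (w j)) * u (c, [ffun j => (q^-1)%g (w j)]).
Proof.
rewrite ffunE /= (bigD1 [ffun j => (q^-1)%g (w j)]) //= [X in _ + X]big1 ?addr0.
  congr (_ * _); apply: eq_bigr => j _.
  by rewrite /monomx ffunE permKV eqxx mulr1.
move=> v hv; have : ~~ [forall j, v j == [ffun j => (q^-1)%g (w j)] j].
  apply: contra hv => /forallP h; apply/eqP/ffunP => j; exact/eqP/h.
rewrite negb_forall => /existsP [j hj].
rewrite (bigD1 j) //= /monomx.
have -> : (w j == q (v j)) = false.
  by apply/negbTE; apply: contra hj => /eqP e; rewrite ffunE e permK.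
by rewrite mulr0 !mul0r.
Qed.

Lemma tpow_fix (K : fieldType) n d mc (P : 'I_n -> bool) (σ : {perm 'I_n}) (two : K) :
  (forall e, (0 < e)%N -> two ^+ e != 1) -> (forall x, ~~ P x -> σ x = x) ->
  forall u : tpow_copies K n d mc,
  act_tpow (fun x => if P x then two else 1) 1 u = u ->
  act_tpow (fun _ => 1) σ u = u.
Proof.
move=> h2 hσ u hu.
have hz : forall c (w : {ffun 'I_d -> 'I_n}) j, P (w j) -> u (c, w) = 0.
  move=> c w j hj; move/ffunP: hu => /(_ (c, w)); rewrite act_tpowE_gen.
  have -> : [ffun j => ((1%g : {perm 'I_n})^-1)%g (w j)] = w by apply/ffunP => i; rewrite ffunE invg1 perm1.
  rewrite -big_mkcond /= prodr_const => e.
  have : (two ^+ #|[pred j | P (w j)]| - 1) * u (c, w) = 0 by rewrite mulrBl e mul1r subrr.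
  have hc : (0 < #|[pred j | P (w j)]|)%N by apply/card_gt0P; exists j.
  move/eqP; rewrite mulf_eq0 subr_eq0 (negbTE (h2 _ hc)) /=.
  by move/eqP.
apply/ffunP => -[c w]; rewrite act_tpowE_gen big1 // mul1r.
have [/existsP [j hj] | hn] := boolP [exists j, P (w j)].
  rewrite (hz _ _ j hj) (hz _ _ j) // ffunE.
  apply/negPn/negP => hn; have := hσ _ hn; rewrite permKV => e.
  by rewrite e in hj; rewrite hj in hn.
congr (u (c, _)); apply/ffunP => j; rewrite ffunE.
have hj : ~~ P (w j) by apply: contra hn => h; apply/existsP; exists j.
by rewrite -{1}(hσ _ hj) permK.
Qed.

Lemma rowof1 (r x : nat) : (x < sumn [:: r])%N -> rowof [:: r] x = 0%N.
Proof. by rewrite /rowof /= => hx; rewrite leqNgt hx. Qed.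

Lemma colof1 (r x : nat) : (x < sumn [:: r])%N -> colof [:: r] x = x.
Proof. by move=> hx; rewrite /colof rowof1 //= subn0. Qed.

Lemma polytab1 (K : fieldType) R r (s : {perm 'I_(sumn [:: r])}) :
  polytab K R s = [ffun a => (a == [ffun _ => ord0])%:R].
Proof.
apply/ffunP => a; rewrite !ffunE (big_pred1 1%g).
  rewrite odd_perm1 expr0 mul1r; congr (_%:R); congr (a == _).
  by apply/ffunP => y; rewrite !ffunE; apply/val_inj; rewrite /= rowof1 ?inordK.
move=> p /=; apply/forallP/eqP => [h | ->].
  apply/permP => y; have := h y; rewrite !colof1 // => /eqP e.
  by rewrite perm1; apply: (perm_inj (s := (s^-1)%g)); apply: val_inj.
by move=> y; rewrite perm1.
Qed.

Lemma one_row (K : fieldType) R (l : seq nat) : size l = 1%N ->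
  forall g, g \in specht K R l -> forall r1 r2 : tabl R l,
  (r1 == [ffun _ => ord0]) = (r2 == [ffun _ => ord0]) -> g r1 = g r2.
Proof.
case: l => [|r [|]] // _; apply: span_closed.
- by move=> r1 r2 _; rewrite !ffunE.
- move=> a u v hu hv r1 r2 e; rewrite !ffunE /=.
  by rewrite (hu _ _ e) (hv _ _ e).
move=> g /mapP [s _ ->] r1 r2 e; rewrite polytab1 !ffunE.
by rewrite e.
Qed.
From mathcomp Require Import zify.

Lemma rowof_cons a l x :
  rowof (a :: l) x = if (x < a)%N then 0%N else (rowof l (x - a)).+1.
Proof.
rewrite /rowof /= -add1n iotaDl count_map /= take0 /= addn0.
case: ltnP => hx.
  rewrite /= (eq_count (a2 := pred0)) ?count_pred0 // => j.
  rewrite /= /preim /=; apply/negbTE; rewrite -ltnNge; lia.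
rewrite add1n; congr (_.+1); apply: eq_count => j; rewrite /= /preim /=.
rewrite add1n; apply/idP/idP; lia.
Qed.

Lemma colof_cons a l x :
  colof (a :: l) x = if (x < a)%N then x else colof l (x - a).
Proof.
rewrite /colof rowof_cons; case: ltnP => hx /=; first by rewrite subn0.
by rewrite subnDA.
Qed.

Lemma rowcol_inj l x y : rowof l x = rowof l y -> colof l x = colof l y -> x = y.
Proof.
elim: l x y => [|a l IH] x y.
  by rewrite /colof /= !subn0.
rewrite rowof_cons colof_cons rowof_cons colof_cons.
case: (ltnP x a) => hx; case: (ltnP y a) => hy //=.
move=> [e1] e2; have := IH _ _ e1 e2; lia.
Qed.

Lemma rowof_le l x : (rowof l x <= size l)%N.
Proof. by rewrite /rowof (leq_trans (count_size _ _)) // size_iota. Qed.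

Section Specht.
Variables (K : fieldType) (R : nat) (l : seq nat).

Definition a0tab : tabl R l := [ffun y : 'I_(sumn l) => inord (rowof l y)].

Lemma polytab_a0 : (size l <= R)%N -> polytab K R (1%g : {perm 'I_(sumn l)}) a0tab = 1.
Proof.
move=> hR; rewrite ffunE (bigD1 1%g) /=; last by apply/forallP => y; rewrite perm1.
rewrite big1 ?addr0.
  rewrite odd_perm1 expr0 mul1r.
  suff -> : (a0tab == [ffun y => [ffun y0 => inord (rowof l ((1%g : {perm 'I_(sumn l)})^-1%g y0))] ((1%g : {perm 'I_(sumn l)})^-1%g y)]) by [].
  by apply/eqP/ffunP => y; rewrite !ffunE invg1 !perm1.
move=> p /andP[/forallP hC hp].
suff -> : (a0tab == [ffun y => [ffun y0 => inord (rowof l ((1%g : {perm 'I_(sumn l)})^-1%g y0))] ((p^-1)%g y)]) = false by rewrite mulr0.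
apply/negbTE; apply: contra hp => /eqP e.
apply/eqP/permP => y; rewrite perm1.
have e1 := congr1 (fun f : tabl R l => val (f (p y))) e; rewrite /= !ffunE invg1 perm1 permK /= in e1.
rewrite !inordK in e1; try by rewrite ltnS (leq_trans (rowof_le _ _)).
have := hC y; rewrite invg1 !perm1 => /eqP e2.
apply: val_inj; apply: rowcol_inj; [exact: e1 | exact: e2].
Qed.

End Specht.

Lemma polytab_anti (K : fieldType) R (l : seq nat) (o1 o2 : 'I_(sumn l)) :
  o1 != o2 -> colof l o1 = colof l o2 -> forall r : tabl R l,
  polytab K R (1%g : {perm 'I_(sumn l)}) [ffun y => r (tperm o1 o2 y)] =
  - polytab K R (1%g : {perm 'I_(sumn l)}) r.
Proof.
move=> hne hc r; set τ := tperm o1 o2.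
have hcτ : forall z, colof l (τ z) = colof l z.
  by move=> z; rewrite /τ; case: tpermP => // ->.
rewrite !ffunE (reindex_inj (mulIg τ)) /= -sumrN.
have eqC : forall p : {perm 'I_(sumn l)},
  [forall y, colof l ((1%g : {perm 'I_(sumn l)})^-1%g ((p * τ)%g y)) == colof l ((1%g : {perm 'I_(sumn l)})^-1%g y)] =
  [forall y, colof l ((1%g : {perm 'I_(sumn l)})^-1%g (p y)) == colof l ((1%g : {perm 'I_(sumn l)})^-1%g y)].
  by move=> p; apply: eq_forallb => y; rewrite invg1 !perm1 permM hcτ.
apply: eq_big => [p | p _]; first exact: eqC.
rewrite odd_permM odd_tperm hne signr_addb mulrN1 mulNr; congr (- (_ * _)).
apply: (congr1 (fun b : bool => b%:R)); apply/idP/idP => /eqP e; apply/eqP/ffunP => y.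
  move/ffunP: e => /(_ (τ y)); rewrite !ffunE tpermK => ->.
  by rewrite invMg tpermV permM tpermK.
move/ffunP: e => /(_ (τ y)); rewrite !ffunE => ->.
by rewrite invMg tpermV permM.
Qed.

Section NatPart.
Local Open Scope nat_scope.

Lemma part2 l : is_partition l -> (2 <= size l)%N ->
  [/\ (0 < nth 0 l 0)%N, (nth 0 l 0 < sumn l)%N, colof l 0 = 0%N & colof l (nth 0 l 0) = 0%N].
Proof.
case: l => [|a [|b l']] // hp _; move: hp => /andP[_ /= /and3P[ha hb _]].
split => //.
- rewrite [sumn _]/=; lia.
by rewrite colof_cons ltnn subnn colof_cons hb.
Qed.

Lemma size_sumn l : is_partition l -> (size l <= sumn l)%N.
Proof.
case/andP => _; elim: l => [|a l IH] //= /andP[ha hl].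
by rewrite -add1n leq_add // IH.
Qed.

End NatPart.
Section Main.
Variable F : fieldType.
Variables (m : nat) (lam : 'I_m.+1 -> seq nat) (k : 'I_m.+1 -> nat).
Local Notation n := (ntot lam).
Local Notation G := {perm 'I_n}.
Local Notation bp := (@blockpres m lam).
Local Notation X := (Xspace F lam).
Local Notation W := (IndW F lam).
Local Notation tch := (@torchar F m lam k).

Lemma permactM (b1 b2 : G) (f : tensmod F lam) :
  permact b1 (permact b2 f) = permact (b2 * b1) f.
Proof.
apply/ffunP => a; rewrite !ffunE; congr (f _); apply/ffunP => x.
by rewrite !ffunE permM.
Qed.

Lemma permact1 (f : tensmod F lam) : permact 1 f = f.
Proof.
apply/ffunP => a; rewrite !ffunE; congr (f _); apply/ffunP => x.
by rewrite !ffunE perm1.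
Qed.

Lemma permactP (b : G) (c : F) (f g : tensmod F lam) :
  permact b (c *: f + g) = c *: permact b f + permact b g.
Proof. by apply/ffunP => a; rewrite !ffunE. Qed.

Lemma bpP (b : G) : reflect (forall x, blk (b x) = blk x) (bp b).
Proof. by apply: (iffP forallP) => H x; apply/eqP/H. Qed.

Lemma bp1 : bp 1.
Proof. by apply/bpP => x; rewrite perm1. Qed.

Lemma bpM (b1 b2 : G) : bp b1 -> bp b2 -> bp (b1 * b2).
Proof. by move=> /bpP h1 /bpP h2; apply/bpP => x; rewrite permM h2 h1. Qed.

Lemma bpV (b : G) : bp b -> bp b^-1.
Proof.
move=> /bpP h; apply/bpP => x; rewrite -{2}(permKV b x) h //.
Qed.

Lemma indvecE (s u : G) (x : tensmod F lam) :
  indvec s x u = if bp (s^-1 * u) then permact (s^-1 * u) x else 0.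
Proof.
rewrite ffunE; case: ifP => hb.
  rewrite (bigD1 (s^-1 * u)%g) /=; last by rewrite hb mulKVg eqxx.
  rewrite big1 ?addr0 // => b /andP[/andP[_ /eqP ->]].
  by rewrite mulKg eqxx.
apply: big1 => b /andP[hb' /eqP e].
by rewrite e mulKg hb' in hb.
Qed.

Lemma permactZ (b : G) (c : F) (f : tensmod F lam) :
  permact b (c *: f) = c *: permact b f.
Proof. by apply/ffunP => a; rewrite !ffunE. Qed.

Lemma indvecP (s : G) (c : F) (x y : tensmod F lam) :
  indvec s (c *: x + y) = c *: indvec s x + indvec s y.
Proof.
apply/ffunP => u; rewrite ffunDE ffunZE !indvecE.
by case: ifP => _; rewrite ?permactP // scaler0 addr0.
Qed.

Lemma indvecZ (s : G) (c : F) (x : tensmod F lam) :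
  indvec s (c *: x) = c *: indvec s x.
Proof.
apply/ffunP => u; rewrite ffunZE !indvecE.
by case: ifP => _; rewrite ?permactZ ?scaler0.
Qed.

Lemma indvec0 (s : G) : indvec s (0 : tensmod F lam) = 0.
Proof. by have := indvecZ s 0 0; rewrite !scale0r. Qed.


Lemma actIndE t (p s : G) (phi : indamb F lam) :
  actInd k t p phi s = tch (fun x => t ((s^-1)%g x)) *: phi (p * s)%g.
Proof. by rewrite ffunE. Qed.

Lemma actIndP t (p : G) (c : F) (phi psi : indamb F lam) :
  actInd k t p (c *: phi + psi) = c *: actInd k t p phi + actInd k t p psi.
Proof.
apply/ffunP => s; rewrite !ffunE scalerDr !scalerA; congr (_ + _); by rewrite mulrC.
Qed.

Lemma actIndZ t (p : G) (c : F) (phi : indamb F lam) :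
  actInd k t p (c *: phi) = c *: actInd k t p phi.
Proof. by apply/ffunP => s; rewrite !ffunE !scalerA mulrC. Qed.

Lemma actInd_sum t (p : G) (I : finType) (f : I -> indamb F lam) :
  actInd k t p (\sum_i f i) = \sum_i actInd k t p (f i).
Proof.
apply/ffunP => s; rewrite !ffunE !sum_ffunE scaler_sumr.
by apply: eq_bigr => i _; rewrite ffunE.
Qed.

Lemma tch_bp (b : G) g : bp b -> tch (fun y => g (b y)) = tch g.
Proof.
move=> /bpP hb; rewrite /torchar [RHS](reindex_inj (@perm_inj _ b)) /=.
by apply: eq_bigr => x _; rewrite hb.
Qed.

Lemma tch_ext g1 g2 : g1 =1 g2 -> tch g1 = tch g2.
Proof. by move=> e; rewrite /torchar; apply: eq_bigr => x _; rewrite e. Qed.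

Lemma actInd_indvec t (q s : G) (x : tensmod F lam) :
  actInd k t q (indvec s x) =
  indvec (q^-1 * s)%g (tch (fun y => t ((s^-1 * q)%g y)) *: x).
Proof.
apply/ffunP => u; rewrite actIndE !indvecE invMg invgK !mulgA.
case: ifP => hb; last by rewrite scaler0.
rewrite permactZ.
rewrite -(tch_bp (fun y => t ((s^-1 * q)%g y)) (bpV hb)).
have e : u^-1%g = ((s^-1*q*u)^-1 * (s^-1*q))%g by rewrite invMg mulgKV.
by rewrite (tch_ext (g2 := fun y => t ((s^-1 * q)%g ((s^-1*q*u)^-1%g y)))) // => y; rewrite -permM -e.
Qed.

Lemma indvec_permact (s b : G) (x : tensmod F lam) : bp b ->
  indvec s (permact b x) = indvec (s * b^-1)%g x.
Proof.
move=> hb; apply/ffunP => u; rewrite !indvecE permactM invMg invgK.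
have -> : bp (b * s^-1 * u)%g = bp (s^-1 * u)%g.
  apply/idP/idP => h; last by rewrite -mulgA bpM.
  by have := bpM (bpV hb) h; rewrite !mulgA mulVg mul1g.
by rewrite mulgA.
Qed.


Lemma permact0 (b : G) : permact b (0 : tensmod F lam) = 0.
Proof. by apply/ffunP => a; rewrite !ffunE. Qed.

Definition Xp : {vspace tensmod F lam} :=
  <<[seq permact b x | b <- [seq b <- enum G | bp b], x <- vbasis X]>>%VS.

Lemma indvec_memW (s : G) (x : tensmod F lam) : x \in X -> indvec s x \in W.
Proof.
move: x; apply: vspace_closed.
- by rewrite indvec0 mem0v.
- by move=> a u v hu hv; rewrite indvecP memvD // memvZ.
move=> x hx; apply: memv_span.
by apply: (allpairs_f (fun s x => indvec s x)); rewrite ?mem_enum.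
Qed.

Lemma permact_memXp (b : G) (x : tensmod F lam) : bp b -> x \in X -> permact b x \in Xp.
Proof.
move=> hb; move: x; apply: vspace_closed.
- by rewrite permact0 mem0v.
- by move=> a u v hu hv; rewrite permactP memvD // memvZ.
move=> x hx; apply: memv_span.
by apply: (allpairs_f (fun s x => permact s x)); rewrite // mem_filter hb mem_enum.
Qed.

Lemma indvec_memW' (s : G) (z : tensmod F lam) : z \in Xp -> indvec s z \in W.
Proof.
move: z; apply: span_closed.
- by rewrite indvec0 mem0v.
- by move=> a u v hu hv; rewrite indvecP memvD // memvZ.
move=> z /allpairsP [[b x] [/=]]; rewrite mem_filter => /andP[hb _] hx ->.
by rewrite indvec_permact // indvec_memW // vbasis_mem.
Qed.

Definition WP (y : indamb F lam) :=
  (forall s b, bp b -> y (s * b)%g = permact b (y s)) /\ (forall s, y s \in Xp).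

Lemma WP_W y : y \in W -> WP y.
Proof.
move: y; apply: span_closed.
- split=> [s b hb|s]; rewrite !ffun0E ?permact0 ?mem0v //.
- move=> a u v [hu1 hu2] [hv1 hv2]; split=> [s b hb|s].
    by rewrite !ffunDE !ffunZE hu1 // hv1 // permactP.
  by rewrite ffunDE ffunZE memvD // memvZ.
move=> y /allpairsP [[s0 x] [/=]]; rewrite mem_enum => _ hx ->; split=> [s b hb|s].
  rewrite !indvecE mulgA.
  have -> : bp (s0^-1 * s * b)%g = bp (s0^-1 * s)%g.
    apply/idP/idP => h; last by rewrite bpM.
    by have := bpM h (bpV hb); rewrite mulgK.
  by case: ifP => _; rewrite ?permact0 // permactM.
rewrite indvecE; case: ifP => h; last by rewrite mem0v.
by rewrite permact_memXp // vbasis_mem.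
Qed.

Lemma actInd_memW t (q : G) y : y \in W -> actInd k t q y \in W.
Proof.
move: y; apply: span_closed.
- have -> : actInd k t q 0 = 0 by apply/ffunP => s; rewrite !ffunE scaler0.
  exact: mem0v.
- by move=> a u v hu hv; rewrite actIndP memvD // memvZ.
move=> y /allpairsP [[s0 x] [/=]] _ hx ->.
by rewrite actInd_indvec indvecZ memvZ // indvec_memW // vbasis_mem.
Qed.

Definition Hset := [set b : G | bp b].

Lemma sum_indvec y : WP y -> \sum_(s : G) indvec s (y s) = #|Hset|%:R *: y.
Proof.
move=> [h1 _]; apply/ffunP => u; rewrite sum_ffunE ffunZE.
rewrite (eq_bigr (fun s => if bp (s^-1 * u)%g then y u else 0)); last first.
  move=> s _; rewrite indvecE; case: ifP => // hb.
  by rewrite -h1 // mulKVg.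
rewrite -big_mkcond /=.
have hinj : injective (fun b : G => u * b^-1)%g.
  by move=> b1 b2 /mulgI /invg_inj.
rewrite (reindex_inj hinj) /=.
rewrite (eq_bigl (fun b => b \in Hset)); last first.
  by move=> b; rewrite inE invMg invgK mulgKV.
by rewrite sumr_const scaler_nat.
Qed.


Local Notation dd := (\sum_(i < m.+1) k i * sumn (lam i))%N.

Lemma D_eq : (\sum_(x < n) k (blk x))%N = dd.
Proof.
rewrite (partition_big (fun x : 'I_n => blk x) xpredT) //=.
apply: eq_bigr => i _.
rewrite (eq_bigr (fun _ => k i)); last by move=> x /eqP ->.
rewrite sum_nat_const mulnC; congr (_ * _)%N.
exact: (card_sig1 (bsize lam) i).
Qed.

Definition w0 : {ffun 'I_dd -> 'I_n} :=
  [ffun j => @tagnat.sig1 n (fun x => k (blk x)) (cast_ord (esym D_eq) j)].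

Lemma w0_prod (f : 'I_n -> F) :
  \prod_(j < dd) f (w0 j) = \prod_(x : 'I_n) f x ^+ k (blk x).
Proof.
rewrite (reindex (cast_ord D_eq)) /=; last first.
  by exists (cast_ord (esym D_eq)) => j _; [apply: cast_ordK | apply: cast_ordKV].
rewrite (eq_bigr (fun j => f (@tagnat.sig1 n (fun x => k (blk x)) j))); last first.
  by move=> j _; rewrite ffunE cast_ordK.
rewrite (partition_big (fun j => @tagnat.sig1 n (fun x => k (blk x)) j) xpredT) //=.
apply: eq_bigr => x _.
rewrite (eq_bigr (fun _ => f x)); last by move=> j /eqP ->.
rewrite prodr_const; congr (_ ^+ _).
exact: (card_sig1 (fun x => k (blk x)) x).
Qed.

Lemma w0_surj x : (0 < k (blk x))%N -> exists j, w0 j = x.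
Proof.
move=> hx; exists (cast_ord D_eq (tagnat.Rank x (Ordinal hx))).
by rewrite ffunE cast_ordK tagnat.Rank1K.
Qed.

Lemma tch_w0 g : tch g = \prod_(j < dd) g (w0 j).
Proof. by rewrite w0_prod. Qed.

Local Notation mc := #|gtabl lam|.
Local Notation TP := (tpow_copies F n dd mc).

Definition wofs (s : G) : {ffun 'I_dd -> 'I_n} := [ffun q => (s^-1)%g (w0 q)].

Definition iotaf (y : indamb F lam) : TP :=
  [ffun cw => \sum_(s : G) ((cw.2 == wofs s)%:R * y s (enum_val cw.1))].

Definition ys (s : G) (u : TP) : tensmod F lam := [ffun a => u (enum_rank a, wofs s)].

Definition Stab := [set σ : G | [ffun q => σ (w0 q)] == w0].

Definition kappa : F := ((#|Hset| * #|Stab|)%:R)^-1.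

Definition pf (u : TP) : indamb F lam :=
  kappa *: \sum_(s : G) indvec s (projv Xp (ys s u)).

Lemma act_tpowE t (q : G) (u : TP) c w :
  act_tpow t q u (c, w) = (\prod_(j < dd) t (w j)) * u (c, [ffun j => (q^-1)%g (w j)]).
Proof.
rewrite ffunE /= (bigD1 [ffun j => (q^-1)%g (w j)]) //= [X in _ + X]big1 ?addr0.
  congr (_ * _); apply: eq_bigr => j _.
  by rewrite /monomx ffunE permKV eqxx mulr1.
move=> v hv; have : ~~ [forall j, v j == [ffun j => (q^-1)%g (w j)] j].
  apply: contra hv => /forallP h; apply/eqP/ffunP => j; exact/eqP/h.
rewrite negb_forall => /existsP [j hj].
rewrite (bigD1 j) //= /monomx.
have -> : (w j == q (v j)) = false.
  by apply/negbTE; apply: contra hj => /eqP e; rewrite ffunE e permK.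
by rewrite mulr0 !mul0r.
Qed.

Lemma iotaf_equiv t (q : G) y :
  iotaf (actInd k t q y) = act_tpow t q (iotaf y).
Proof.
apply/ffunP => -[c w]; rewrite act_tpowE !ffunE /= mulr_sumr.
have hinj : injective (fun s : G => q^-1 * s)%g by apply: mulgI.
rewrite (reindex_inj hinj) /=; apply: eq_bigr => s _.
rewrite actIndE ffunZE mulKVg.
have -> : (w == wofs (q^-1 * s)%g) = ([ffun j => (q^-1)%g (w j)] == wofs s).
  apply/eqP/eqP => [-> | e]; apply/ffunP => j; rewrite !ffunE.
    by rewrite invMg invgK permM permK.
  move/ffunP: (e) => /(_ j); rewrite !ffunE => e2.
  by rewrite invMg invgK permM -e2 permKV.
case: eqP => e; last by rewrite !mul0r mulr0.
rewrite !mul1r; congr (_ * _); rewrite tch_w0; apply: eq_bigr => j _.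
move/ffunP: (e) => /(_ j); rewrite !ffunE => e2.
by rewrite -[w j](permKV q) e2 invMg invgK permM.
Qed.

Lemma ys_act t (q s : G) (u : TP) :
  ys s (act_tpow t q u) = tch (fun x => t ((s^-1)%g x)) *: ys (q * s)%g u.
Proof.
apply/ffunP => a; rewrite [LHS]ffunE act_tpowE [RHS]ffunZE [ys _ _ _]ffunE.
congr (_ * u (_, _)).
  by rewrite tch_w0; apply: eq_bigr => j _; rewrite ffunE.
by apply/ffunP => j; rewrite !ffunE invMg permM.
Qed.

Lemma pf_equiv t (q : G) (u : TP) :
  pf (act_tpow t q u) = actInd k t q (pf u).
Proof.
rewrite /pf actIndZ actInd_sum; congr (_ *: _).
rewrite [RHS](reindex_inj (mulgI q)) /=.
apply: eq_bigr => s _.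
rewrite actInd_indvec mulKg ys_act linearZ /=.
congr (indvec _ (_ *: _)); apply: tch_ext => x.
by rewrite invMg mulgKV.
Qed.

Lemma pf_mem u : pf u \in W.
Proof.
rewrite /pf memvZ // rpred_sum // => s _.
by rewrite indvec_memW' // memv_proj.
Qed.

Lemma StabP (σ : G) : reflect (forall j, σ (w0 j) = w0 j) (σ \in Stab).
Proof.
rewrite inE; apply: (iffP eqP) => [e j | h].
  by move/ffunP: e => /(_ j); rewrite ffunE.
by apply/ffunP => j; rewrite ffunE h.
Qed.

Lemma StabV (σ : G) : σ \in Stab -> σ^-1%g \in Stab.
Proof.
move/StabP => h; apply/StabP => j.
by rewrite -{1}(h j) permK.
Qed.

Hypothesis htriv : forall σ, σ \in Stab -> bp σ /\ forall z, z \in Xp -> permact σ z = z.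

Lemma ys_iota (s : G) y : WP y -> ys s (iotaf y) = #|Stab|%:R *: y s.
Proof.
move=> [h1 h2]; apply/ffunP => a; rewrite ffunZE [LHS]ffunE ffunE /= enum_rankK.
rewrite scaler_nat -sumr_const.
have hinj : injective (fun σ : G => s * σ^-1)%g.
  by move=> b1 b2 /mulgI /invg_inj.
rewrite (reindex_inj hinj) /= [RHS]big_mkcond /=; apply: eq_bigr => σ _.
have -> : (wofs s == wofs (s * σ^-1)%g) = (σ \in Stab).
  apply/eqP/StabP => [e j | h].
    move/ffunP: e => /(_ j); rewrite !ffunE invMg invgK permM.
    by move/perm_inj/esym.
  by apply/ffunP => j; rewrite [wofs s _]ffunE [wofs _ _]ffunE invMg invgK permM h.
case: ifP => hs; last by rewrite mul0r.
have [hb ht] := htriv (StabV hs).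
by rewrite mul1r h1 // ht // ffunE.
Qed.

Hypothesis hcard : (#|Hset| * #|Stab|)%:R != 0 :> F.

Lemma pf_iota y : y \in W -> pf (iotaf y) = y.
Proof.
move=> /WP_W hy; rewrite /pf.
rewrite (eq_bigr (fun s => #|Stab|%:R *: indvec s (y s))); last first.
  move=> s _; rewrite ys_iota // projv_id ?indvecZ //.
  by rewrite memvZ //; case: hy => _ ->.
rewrite -scaler_sumr sum_indvec // !scalerA /kappa natrM.
by rewrite -mulrA [(#|Stab|%:R * _)]mulrC mulVf ?scale1r // -natrM.
Qed.

Lemma iotaf_lin : linear iotaf.
Proof.
move=> a u v; apply/ffunP => cw; rewrite !ffunE scaler_sumr -big_split /=.
apply: eq_bigr => s _; rewrite !ffunE /=.
by rewrite mulrDr scalerAr.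
Qed.

Lemma pf_lin : linear pf.
Proof.
move=> a u v; rewrite /pf.
have -> : \sum_(s : G) indvec s (projv Xp (ys s (a *: u + v))) =
   a *: \sum_(s : G) indvec s (projv Xp (ys s u)) + \sum_(s : G) indvec s (projv Xp (ys s v)).
  rewrite scaler_sumr -big_split; apply: eq_bigr => s _ /=.
  rewrite -indvecP -linearP /=; congr (indvec _ (projv _ _)).
  by apply/ffunP => x; rewrite !ffunE.
by rewrite scalerDr !scalerA mulrC.
Qed.

Lemma main_deg : is_poly_deg (@actInd F m lam k) W dd.
Proof.
pose iL : {linear indamb F lam -> TP} := HB.pack iotaf (GRing.isLinear.Build _ _ _ _ iotaf iotaf_lin).
pose pL : {linear TP -> indamb F lam} := HB.pack pf (GRing.isLinear.Build _ _ _ _ pf pf_lin).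
exists mc, (linfun iL), (linfun pL); split.
- by move=> u; rewrite lfunE pf_mem.
- by move=> w hw; rewrite !lfunE /= pf_iota.
move=> t q _; split.
  by move=> w _; rewrite !lfunE /= iotaf_equiv.
by move=> u; rewrite !lfunE /= pf_equiv.
Qed.

Definition zero0 (a : gtabl lam) := [forall x, (blk x == ord0) ==> (a x == ord0)].

Definition PP (z : tensmod F lam) := forall a a' : gtabl lam,
  (forall x, blk x != ord0 -> a x = a' x) -> zero0 a = zero0 a' -> z a = z a'.

Lemma blk_bpos i (o : 'I_(bsize lam i)) : blk (bpos o) = i.
Proof. exact: tagnat.Rank1K. Qed.

Lemma zero0_restr (a : gtabl lam) : zero0 a = (restr a ord0 == [ffun _ => ord0]).
Proof.
apply/forallP/eqP => [h | h].
  apply/ffunP => o; rewrite !ffunE; apply/eqP.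
  by have := h (bpos o); rewrite blk_bpos eqxx.
move=> x; apply/implyP => /eqP hx.
have [o ho] := sig1_Rank hx.
by move/ffunP: h => /(_ o); rewrite !ffunE /bpos ho => ->.
Qed.

Lemma zero0_bp (b : G) (a : gtabl lam) : bp b -> zero0 [ffun x => a (b x)] = zero0 a.
Proof.
move=> /bpP hb; apply/forallP/forallP => h x; apply/implyP => hx.
  by have := implyP (h (b^-1 x)%g); rewrite ffunE permKV; apply; rewrite -hb permKV.
by rewrite ffunE; apply: (implyP (h (b x))); rewrite hb.
Qed.

Lemma PP_permact (b : G) z : bp b -> PP z -> PP (permact b z).
Proof.
move=> hb hz a a' h1 h2; rewrite !ffunE; apply: hz.
  by move=> x hx; rewrite !ffunE h1 //; move/bpP: hb => ->.
by rewrite !zero0_bp.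
Qed.

Lemma PP_X (hone : size (lam ord0) = 1%N) x : x \in X -> PP x.
Proof.
move: x; apply: span_closed.
- by move=> a a' _ _; rewrite !ffunE.
- by move=> c u v hu hv a a' h1 h2; rewrite !ffunE (hu _ _ h1 h2) (hv _ _ h1 h2).
move=> x /mapP [c _ ->] a a' h1 h2; rewrite !ffunE; apply: eq_bigr => i _.
have [-> | hi] := eqVneq i ord0.
  apply: (one_row hone); first by rewrite vbasis_mem // mem_tnth.
  by rewrite -!zero0_restr.
congr (_ _); apply/ffunP => o; rewrite !ffunE h1 //.
by rewrite blk_bpos.
Qed.

Lemma PP_Xp (hone : size (lam ord0) = 1%N) z : z \in Xp -> PP z.
Proof.
move: z; apply: span_closed.
- by move=> a a' _ _; rewrite !ffunE.
- by move=> c u v hu hv a a' h1 h2; rewrite !ffunE (hu _ _ h1 h2) (hv _ _ h1 h2).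
move=> z /allpairsP [[b x] [/=]]; rewrite mem_filter => /andP[hb _] hx ->.
by apply: PP_permact => //; apply: (PP_X hone); rewrite vbasis_mem.
Qed.

Lemma b0_bp (σ : G) : (forall x, blk x != ord0 -> σ x = x) -> bp σ.
Proof.
move=> hσ; apply/bpP => x.
have [h | h] := eqVneq (blk x) ord0; last by rewrite hσ.
have [h2 | h2] := eqVneq (blk (σ x)) ord0; first by rewrite h h2.
by have := hσ _ h2; move/perm_inj => ->.
Qed.

Lemma b0V (σ : G) : (forall x, blk x != ord0 -> σ x = x) ->
  forall x, blk x != ord0 -> (σ^-1)%g x = x.
Proof. by move=> hσ x hx; rewrite -{1}(hσ _ hx) permK. Qed.

Section NotPoly.
Variable two : F.
Hypothesis h2 : forall e, (0 < e)%N -> two ^+ e != 1.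
Hypothesis h20 : two != 0.
Let t2 := fun x : 'I_n => if blk x == ord0 then two else 1.

Lemma t2_nz : nowhere0 t2.
Proof. by move=> x; rewrite /t2; case: ifP => _; rewrite ?oner_eq0. Qed.

Lemma one_nz : nowhere0 (fun _ : 'I_n => 1 : F).
Proof. by move=> x; rewrite oner_eq0. Qed.

Lemma poly_deg_fix (Wj : {vspace indamb F lam}) dj (σ : G) :
  is_poly_deg (actInd k) Wj dj -> (forall x, blk x != ord0 -> σ x = x) ->
  forall w, w \in Wj -> actInd k t2 1 w = w -> actInd k (fun _ => 1) σ w = w.
Proof.
move=> [mc [io [p [hp1 hp2 hp3]]]] hσ w hw hfix.
have e1 := (hp3 t2 1%g t2_nz).1 w hw; rewrite hfix in e1.
have hσ' : forall x, ~~ (blk x == ord0) -> σ x = x by move=> x /hσ.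
have e3 := @tpow_fix F n dj mc (fun x => blk x == ord0) σ two h2 hσ' (io w) (esym e1).
by rewrite -[in RHS](hp2 w hw) -[in RHS]e3 (hp3 _ _ one_nz).2 hp2.
Qed.

Lemma not_poly (σ : G) (x : tensmod F lam) :
  k ord0 = 0%N -> (forall x, blk x != ord0 -> σ x = x) -> x \in X ->
  permact σ^-1 x != x -> ~ is_poly (actInd k) W.
Proof.
move=> hk hσ hx hne [N [Ws [ds [hsum hdir hj]]]].
set w := indvec 1 x.
have hw : w \in W by apply: indvec_memW.
have hfix : actInd k t2 1 w = w.
  rewrite /w actInd_indvec invg1 mulg1.
  set z := tch _; suff -> : z = 1 by rewrite scale1r.
  rewrite /z /torchar big1 // => y _; rewrite perm1 /t2.
  by case: eqP => [e | _]; rewrite ?e ?hk ?expr0 ?expr1n.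
rewrite -hsum in hw; case/memv_sumP: hw => ws hws ew.
have hinv : forall j, actInd k t2 1 (ws j) \in Ws j.
  by move=> j; apply: ((hj j).1 t2 1%g t2_nz); apply: hws.
have hall : forall j, actInd k t2 1 (ws j) = ws j.
  have := (elimT directv_sum_unique hdir) (fun j => actInd k t2 1 (ws j)) ws (fun j _ => hinv j) hws.
  rewrite -actInd_sum -ew hfix ew eqxx => /esym /forall_inP h j.
  by apply/eqP/h.
have hσw : actInd k (fun _ => 1) σ w = w.
  rewrite ew actInd_sum; apply: eq_bigr => j _.
  by apply: (poly_deg_fix (hj j).2 hσ); [apply: hws | apply: hall].
move/ffunP: hσw => /(_ (σ^-1)%g).
rewrite /w actIndE mulgV !indvecE invg1 !mul1g bp1 permact1.
rewrite (bpV (b0_bp hσ)) => e.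
move: hne; rewrite -e.
set z := tch _; suff -> : z = 1 by rewrite scale1r eqxx.
by rewrite /z /torchar big1 // => y _; rewrite expr1n.
Qed.

End NotPoly.

Lemma Stab_triv (kinc : forall i j : 'I_m.+1, (i < j)%N -> (k i < k j)%N)
  (hc : k ord0 <> 0%N \/ (k ord0 = 0%N /\ size (lam ord0) = 1%N)) σ :
  σ \in Stab -> bp σ /\ forall z, z \in Xp -> permact σ z = z.
Proof.
move=> hs.
have kpos : forall x : 'I_n, blk x != ord0 -> (0 < k (blk x))%N.
  move=> x hx; have h0 : (0 < blk x)%N.
    by rewrite lt0n; apply: contra hx => /eqP h; apply/eqP/val_inj.
  exact: leq_trans (kinc ord0 (blk x) h0).
have fixp : forall x : 'I_n, (0 < k (blk x))%N -> σ x = x.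
  by move=> x /w0_surj [j <-]; apply/StabP.
have hσ : forall x : 'I_n, blk x != ord0 -> σ x = x by move=> x /kpos /fixp.
split; first exact: b0_bp hσ.
case: hc => [hk0 | [_ hone]] z hz.
  have -> : σ = 1%g.
    apply/permP => x; rewrite perm1; apply: fixp.
    have [-> | /kpos //] := eqVneq (blk x) ord0.
    by rewrite lt0n; apply/eqP.
  by rewrite permact1.
apply/ffunP => a; rewrite ffunE; apply: (PP_Xp hone hz).
  by move=> x hx; rewrite ffunE hσ.
by rewrite zero0_bp // b0_bp.
Qed.

Definition ext (rr : forall i, tabl n (lam i)) : gtabl lam :=
  [ffun x => rr (blk x) (tagnat.sig2 x)].

Lemma restr_ext rr i : restr (ext rr) i = rr i.
Proof.
apply/ffunP => o; rewrite !ffunE.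
by rewrite /blk /tagnat.sig1 /tagnat.sig2 /bpos /tagnat.Rank tagnat.rankK /=.
Qed.


Lemma bsize_le i : (bsize lam i <= n)%N.
Proof. by rewrite /ntot (bigD1 i) //= leq_addr. Qed.

Lemma exists_nonfixed (hpart : forall i, is_partition (lam i))
  (hsz : (2 <= size (lam ord0))%N) (h20 : (2 : F) != 0) :
  exists σ : G, (forall x, blk x != ord0 -> σ x = x) /\
     exists2 x, x \in X & permact σ^-1 x != x.
Proof.
have [hp1 hp2 hc1 hc2] := part2 (hpart ord0) hsz.
have hsizeR : forall i, (size (lam i) <= n)%N.
  by move=> i; exact: leq_trans (size_sumn (hpart i)) (bsize_le i).
pose o1 : 'I_(bsize lam ord0) := Ordinal (ltn_trans hp1 hp2).
pose o2 : 'I_(bsize lam ord0) := Ordinal hp2.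
pose τ := tperm o1 o2.
pose σ : G := tperm (bpos o1) (bpos o2).
have hne : o1 != o2.
  by apply/eqP => /(congr1 val) /= e; move: (hp1); rewrite -e.
have hcol : colof (lam ord0) o1 = colof (lam ord0) o2 by rewrite /= hc1 hc2.
have hσb : forall o : 'I_(bsize lam ord0), σ (bpos o) = bpos (τ o).
  move=> o; rewrite /σ /τ; case: (tpermP o1 o2 o) => [-> | -> | h1 h2].
  - by rewrite tpermL.
  - by rewrite tpermR.
  rewrite tpermD //.
    by apply/eqP => /Rank_inj e; apply: h1.
  by apply/eqP => /Rank_inj e; apply: h2.
have hσo : forall x : 'I_n, blk x != ord0 -> σ x = x.
  move=> x hx; rewrite tpermD //; apply: contra hx => /eqP <-; by rewrite blk_bpos.
exists σ; split => //.
have hrσ : forall a : gtabl lam, restr [ffun x => a (σ x)] ord0 = [ffun y => restr a ord0 (τ y)].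
  by move=> a; apply/ffunP => o; rewrite !ffunE hσb.
pose g i j := tnth (vbasis (specht F n (lam i))) j.
have hspan : forall i, polytab F n (1%g : {perm 'I_(sumn (lam i))}) \in specht F n (lam i).
  by move=> i; apply: memv_span; apply: map_f; rewrite mem_enum.
have hNF : [exists j, [exists a : gtabl lam,
     g ord0 j (restr [ffun x => a (σ x)] ord0) != g ord0 j (restr a ord0)]].
  apply: contraT => /existsPn hno.
  have hall : forall f, f \in specht F n (lam ord0) -> forall a : gtabl lam,
      f (restr [ffun x => a (σ x)] ord0) = f (restr a ord0).
    apply: vspace_closed.
    - by move=> a; rewrite !ffunE.
    - by move=> c u v hu hv a; rewrite !ffunE hu hv.
    move=> f /tnthP [j ->] a.
    by have := hno j; move/existsPn/(_ a)/negbNE/eqP.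
  have := hall _ (hspan ord0) (ext (fun i => a0tab n (lam i))).
  rewrite hrσ restr_ext (@polytab_anti F n (lam ord0) o1 o2 hne hcol) (@polytab_a0 F n (lam ord0) (hsizeR ord0)).
  move=> e; move: h20; rewrite -[2]/(1 *+ 2) mulr2n -{2}e subrr eqxx.
  by [].
have hdim : forall i, (0 < \dim (specht F n (lam i)))%N.
  move=> i; rewrite lt0n dimv_eq0; apply/negP => /eqP h0.
  have := hspan i; rewrite h0 memv0 => /eqP e0.
  have := @polytab_a0 F n (lam i) (hsizeR i); rewrite e0 ffunE => /eqP.
  by rewrite eq_sym oner_eq0.
pose NFb i (j : 'I_(\dim (specht F n (lam i)))) := [exists a : gtabl lam,
     g i j (restr [ffun x => a (σ x)] i) != g i j (restr a i)].
pose c : {dffun forall i : 'I_m.+1, 'I_(\dim (specht F n (lam i)))} :=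
  [ffun i => odflt (Ordinal (hdim i)) [pick j | (i == ord0) && NFb i j]].
pose x := tens (fun i => g i (c i)).
exists x.
  apply: memv_span; apply: map_f; by rewrite mem_enum.
have hc0 : NFb ord0 (c ord0).
  rewrite /c ffunE; case: pickP => [j /andP [_ hj] | hn] //=.
  exfalso; case/existsP: hNF => j hj; by have := hn j; rewrite eqxx /= /NFb hj.
case/existsP: hc0 => a0 ha0.
have hnz : forall i, exists r, g i (c i) r != 0.
  move=> i; have hg : g i (c i) != 0.
    exact: free_not0 (basis_free (vbasisP _)) (mem_tnth _ _).
  case: (boolP [exists r, g i (c i) r != 0]) => [/existsP // | /existsPn h].
  exfalso; move/negP: hg; apply; apply/eqP/ffunP => r; rewrite ffun0E.
  by have := h r; rewrite negbK => /eqP.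
pose rr i := odflt (a0tab n (lam i)) [pick r | g i (c i) r != 0].
have hrr : forall i, g i (c i) (rr i) != 0.
  move=> i; rewrite /rr; case: pickP => [r -> // | hn].
  by have [r hr] := hnz i; rewrite hn in hr.
pose a : gtabl lam := [ffun y => if blk y == ord0 then a0 y else ext rr y].
have ra0 : restr a ord0 = restr a0 ord0.
  by apply/ffunP => o; rewrite [LHS]ffunE [RHS]ffunE [a _]ffunE blk_bpos eqxx.
have ras0 : restr [ffun y => a (σ y)] ord0 = restr [ffun y => a0 (σ y)] ord0.
  apply/ffunP => o; rewrite [LHS]ffunE [LHS]ffunE [RHS]ffunE [RHS]ffunE [a _]ffunE.
  by rewrite hσb blk_bpos eqxx.
have rai : forall i, i != ord0 -> restr a i = rr i.
  move=> i hi; apply/ffunP => o.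
  move/ffunP: (restr_ext rr i) => /(_ o) <-.
  rewrite [restr (ext rr) i o]ffunE ffunE [a _]ffunE blk_bpos (negbTE hi).
  by [].
have rasi : forall i, i != ord0 -> restr [ffun y => a (σ y)] i = restr a i.
  move=> i hi; apply/ffunP => o; rewrite !ffunE hσo // blk_bpos //.
have hP : \prod_(i | i != ord0) g i (c i) (rr i) != 0.
  by apply/prodf_neq0 => i _; apply: hrr.
rewrite tpermV; apply/negP => /eqP /ffunP /(_ a).
rewrite [permact _ _ _]ffunE /x ![tens _ _]ffunE.
rewrite (bigD1 ord0) // [RHS](bigD1 ord0) //= ras0 ra0.
rewrite (eq_bigr (fun i => g i (c i) (rr i))); last by move=> i hi; rewrite rasi // rai.
rewrite [in RHS](eq_bigr (fun i => g i (c i) (rr i))); last by move=> i hi; rewrite rai.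
by move/(mulIf hP)/eqP; apply/negP.
Qed.
End Main.

Lemma CC_two_pow e : (0 < e)%N -> (2 : CC) ^+ e != 1.
Proof.
move=> he; rewrite -natrX pnatr_eq1; case: e he => // e _.
rewrite expnS; have := expn_gt0 2 e; lia.
Qed.

Lemma CC_two : (2 : CC) != 0.
Proof. by rewrite pnatr_eq0. Qed.

Theorem proposition2p2 (m : nat) (lam : 'I_m.+1 -> seq nat)
    (k : 'I_m.+1 -> nat) :
  (forall i, is_partition (lam i)) ->
  (forall i, (0 < sumn (lam i))%N) ->
  (forall i j : 'I_m.+1, (i < j)%N -> (k i < k j)%N) ->
  (is_poly (@actInd CC m lam k) (IndW CC lam) <->
     (k ord0 <> 0%N \/ (k ord0 = 0%N /\ size (lam ord0) = 1%N))) /\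
  ((k ord0 <> 0%N \/ (k ord0 = 0%N /\ size (lam ord0) = 1%N)) ->
     is_poly_deg (@actInd CC m lam k) (IndW CC lam)
       (\sum_(i < m.+1) k i * sumn (lam i))%N).
Proof.
move=> hpart hpos kinc.
have hdeg : (k ord0 <> 0%N \/ (k ord0 = 0%N /\ size (lam ord0) = 1%N)) ->
     is_poly_deg (@actInd CC m lam k) (IndW CC lam)
       (\sum_(i < m.+1) k i * sumn (lam i))%N.
  move=> hc; apply: main_deg; first exact: Stab_triv.
  rewrite pnatr_eq0 muln_eq0 negb_or -!lt0n; apply/andP; split.
    by apply/card_gt0P; exists 1%g; rewrite inE bp1.
  by apply/card_gt0P; exists 1%g; apply/StabP => j; rewrite perm1.
split; last exact: hdeg.
split.
  move=> hP; have [hk0 | hk0] := eqVneq (k ord0) 0%N; last by left; apply/eqP.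
  right; split => //.
  have [hs | hs | //] := ltngtP (size (lam ord0)) 1.
    move: (hpos ord0); move: hs; rewrite ltnS leqn0 size_eq0 => /eqP ->.
    by [].
  have [σ [hσ [x hx hne]]] := exists_nonfixed hpart hs CC_two.
  by case: (not_poly CC_two_pow CC_two hk0 hσ hx hne).
move=> hc; exists 1%N, (fun _ => IndW CC lam), (fun _ => (\sum_(i < m.+1) k i * sumn (lam i))%N).
split.
- by rewrite big_ord1.
- apply/directv_sum_independent => us hus hsum j _.
  by rewrite big_ord1 in hsum; rewrite (ord1 j).
move=> j; split; last exact: hdeg.
by move=> t s _ w hw; apply: actInd_memW.
Qed.
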